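(* Let $S$, $v$, $\hat S$ and $\mathrm{Lip}_a$ be as in the context. For every $f\in C^1(\mathbb R^2,\mathbb R)$, $$\mathrm{Lip}_a(f,x)\ge|P_{v(x)}\nabla f(x)|\qquad\text{for all }x\in\hat S.$$
   Context: Let $T_1=\begin{pmatrix}3/5&0\\0&1/5\end{pmatrix}$, $T_2=\begin{pmatrix}3/10&\sqrt3/10\\ \sqrt3/10&1/2\end{pmatrix}$, $T_3=\begin{pmatrix}3/10&-\sqrt3/10\\ -\sqrt3/10&1/2\end{pmatrix}$, $\bar A=(0,0)$, $\bar B=(1,1/\sqrt3)$, $\bar C=(1,-1/\sqrt3)$, $\psi_1(x)=\bar A+T_1(x-\bar A)$, $\psi_2(x)=\bar B+T_2(x-\bar B)$, $\psi_3(x)=\bar C+T_3(x-\bar C)$; the harmonic Sierpinski gasket $S$ is the unique nonempty compact set with $S=\bigcup_i\psi_i(S)$. Let $\Sigma=\{1,2,3\}^{\mathbb N}$, $\psi_{w_0\dots w_l}=\psi_{w_0}\circ\cdots\circ\psi_{w_l}$ (affine with constant derivative $D\psi_{w_0\dots w_l}$), and $\Phi:\Sigma\to S$, $\Phi(w)=$ the unique point of $\bigcap_l\psi_{w_0\dots w_l}(\triangle)$, $\triangle$ the closed triangle $\bar A\bar B\bar C$. Let $N=\{\psi_{w_0\dots w_l}(P): l\ge0,\ w\in\Sigma,\ P\in\{\bar A,\bar B,\bar C\}\}$ (countable; exactly the points with more than one coding). Kusuoka's measure: with $(\mathcal LA)(x)=\sum_i{}^tD\psi_iA_{\psi_i(x)}D\psi_i$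 on continuous symmetric-matrix fields, having simple positive eigenvalue $\beta$, let $\tau$ be the unique semipositive-definite symmetric-matrix-valued Borel measure on $S$ with $\mathrm{tr}\,\tau(S)=1$ and $\mathcal L^*\tau=\beta\tau$; $\tau(S)$ is a positive multiple of $Id$; $\kappa(E)=\mathrm{tr}\,\tau(E)$ is a non-atomic probability measure. For a unit vector $v$, $P_v$ is orthogonal projection onto $\mathbb Rv$; $\|A\|_{HS}^2=\mathrm{tr}({}^tAA)$. There is a Borel field of unit vectors $v$ with $\tau=P_{v(x)}\kappa$. Let $\tilde S$ be the set of $x=\Phi(w)$ at which $P_{v(x)}=\lim_{l\to\infty}D\psi_{w_0\dots w_{l-1}}{}^tD\psi_{w_0\dots w_{l-1}}/\|D\psi_{w_0\dots w_{l-1}}\|_{HS}^2$, and $\hat S=\tilde S\setminus N$ ($\kappa(\hat S)=1$). For $h:\mathbb R^2\to\mathbb R$ and $x\in S$, $\mathrm{Lip}_a(h,x)=\lim_{r\to0}\sup\{|h(y)-h(z)|/\|y-z\|: y\ne z,\ y,z\in S\cap B(x,r)\}$ (local Lipschitz constant computed on $S$). *)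

(* Defs.v *)
From HB Require Import structures.
From mathcomp Require Import all_boot all_order all_algebra.
From mathcomp Require Import all_classical all_reals all_analysis.
Set Implicit Arguments. Unset Strict Implicit. Unset Printing Implicit Defensive.
Import Order.TTheory GRing.Theory Num.Theory.
Import numFieldNormedType.Exports.
Local Open Scope classical_set_scope.
Local Open Scope ring_scope.

Section HSG.
Variable R : realType.

Definition V := 'cV[R]_2.
Definition Mat := 'M[R]_2.

Definition mkv (a b : R) : V := \col_(i < 2) (if i == ord0 then a else b).
Definition mkM (a b c d : R) : Mat :=
  \matrix_(i < 2, j < 2)
    (if i == ord0 then (if j == ord0 then a else b)
                  else (if j == ord0 then c else d)).

Definition eucl (u : V) : R := Num.sqrt (\sum_(i < 2) u i ord0 ^+ 2).

Definition s3 : R := Num.sqrt 3.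

Definition T1 : Mat := mkM (3/5) 0 0 (1/5).
Definition T2 : Mat := mkM (3/10) (s3/10) (s3/10) (1/2).
Definition T3 : Mat := mkM (3/10) (- (s3/10)) (- (s3/10)) (1/2).
Definition Abar : V := mkv 0 0.
Definition Bbar : V := mkv 1 (1 / s3).
Definition Cbar : V := mkv 1 (- (1 / s3)).

(* index i : 'I_3 with values 0,1,2 stands for the paper's 1,2,3 *)
Definition Tm (i : 'I_3) : Mat :=
  match val i with 0 => T1 | 1 => T2 | _ => T3 end.
Definition Pt (i : 'I_3) : V :=
  match val i with 0 => Abar | 1 => Bbar | _ => Cbar end.

Definition psi (i : 'I_3) (x : V) : V := Pt i + Tm i *m (x - Pt i).

(* psi_{w0 ... wl} = psi_{w0} o ... o psi_{wl} for the word [:: w0; ...; wl] *)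
Definition psiw (s : seq 'I_3) (x : V) : V := foldr psi x s.
(* its (constant) derivative T_{w0} ... T_{wl} *)
Definition Dpsiw (s : seq 'I_3) : Mat := foldr (fun i M => Tm i *m M) 1%:M s.

Definition triangle : set V :=
  [set p | exists a b c : R, [/\ 0 <= a, 0 <= b, 0 <= c, a + b + c = 1 &
                              p = a *: Abar + b *: Bbar + c *: Cbar]].

(* coding space Sigma = {1,2,3}^N; the prefix w_0 ... w_{l-1} is mkseq w l *)
Definition Sigma := nat -> 'I_3.

(* x = Phi(w): x is the (unique) point of \bigcap_l psi_{w0..wl}(triangle) *)
Definition is_Phi (w : Sigma) (x : V) : Prop :=
  forall l : nat, (psiw (mkseq w l.+1) @` triangle) x.

Definition Nset : set V :=
  [set x | exists (s : seq 'I_3) (P : 'I_3), s <> [::] /\ x = psiw s (Pt P)].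

Definition hs2 (M : Mat) : R := \tr (M^T *m M).
Definition Proj (u : V) : Mat := u *m u^T.

Definition tildeS (v : V -> V) : set V :=
  [set x | exists w : Sigma, is_Phi w x /\
     ((fun l : nat => (hs2 (Dpsiw (mkseq w l)))^-1 *:
                      (Dpsiw (mkseq w l) *m (Dpsiw (mkseq w l))^T))
        @ \oo --> Proj (v x))].
Definition hatS (v : V -> V) : set V := tildeS v `\` Nset.

Definition LipSup (S : set V) (h : V -> R) (x : V) (r : R) : \bar R :=
  ereal_sup [set e : \bar R | exists y z : V,
     [/\ S y /\ S z, y <> z, eucl (y - x) < r, eucl (z - x) < r &
         e = ((`|h y - h z| / eucl (y - z))%:E)]].
Definition Lip_a (S : set V) (h : V -> R) (x : V) : \bar R :=
  lim (LipSup S h x r @[r --> 0^'+]).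

Definition grad (f : V -> R) (x : V) : V :=
  \col_(i < 2) ('d f x (delta_mx i ord0 : V)).
Definition C1 (f : V -> R) : Prop :=
  (forall x : V, differentiable f x) /\ continuous (grad f).

Definition is_HSG (S : set V) : Prop :=
  [/\ compact S, S !=set0 & S = \bigcup_(i in [set: 'I_3]) (psi i @` S)].

Definition Lop (A : V -> Mat) (x : V) : Mat :=
  \sum_(i < 3) ((Tm i)^T *m A (psi i x) *m Tm i).

Definition symfield (S : set V) (A : V -> Mat) : Prop :=
  {within S, continuous A} /\ (forall x, S x -> (A x)^T = A x).

Definition simple_pos_eigval (S : set V) (beta : R) : Prop :=
  0 < beta /\
  exists A : V -> Mat, [/\ symfield S A, (exists x, S x /\ A x <> 0),
    (forall x, S x -> Lop A x = beta *: A x) &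
    (forall B : V -> Mat, symfield S B -> (forall x, S x -> Lop B x = beta *: B x) ->
       exists c : R, forall x, S x -> B x = c *: A x)].

Definition Vb := g_sigma_algebraType (@open V).
Definition borel (E : set V) : Prop := measurable (E : set Vb).

(* tau : semipositive-definite symmetric matrix valued Borel measure on S,
   tr tau(S) = 1, L^* tau = beta tau, where (L^* tau)(E) =
   sum_i Dpsi_i tau(psi_i^{-1} E) ^tDpsi_i (adjoint for the pairing
   <A, tau> = \int tr(A dtau)). *)
Definition is_kusuoka (S : set V) (beta : R) (tau : set V -> Mat) : Prop :=
  [/\ (forall E, borel E -> (tau E)^T = tau E /\
                  forall u : V, 0 <= (u^T *m tau E *m u) ord0 ord0),
      (forall F : nat -> set V, (forall n, borel (F n)) -> trivIset setT F ->
         (fun n : nat => \sum_(k < n) tau (F k)) @ \oo --> tau (\bigcup_n F n)),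
      (forall E, borel E -> tau E = tau (E `&` S)),
      \tr (tau S) = 1 &
      (forall E, borel E ->
         beta *: tau E = \sum_(i < 3) (Tm i *m tau (psi i @^-1` E) *m (Tm i)^T))].

End HSG.

(* Main.v *)
Require Import Defs.
From HB Require Import structures.
From mathcomp Require Import all_boot all_order all_algebra.
From mathcomp Require Import all_classical all_reals all_analysis.
From mathcomp Require Import lra ring.
Import Order.TTheory GRing.Theory Num.Theory.
Import numFieldNormedType.Exports.
Local Open Scope classical_set_scope.
Local Open Scope ring_scope.
Definition i0 : 'I_2 := ord0.
Definition i1 : 'I_2 := Ordinal (isT : 1 < 2)%N.

Lemma sum2 {R : realType} (F : 'I_2 -> R) : \sum_i F i = F i0 + F i1.
Proof. by rewrite big_ord_recl big_ord1; congr (_ + F _); apply/val_inj. Qed.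

Lemma ord2P (P : 'I_2 -> Prop) : P i0 -> P i1 -> forall i, P i.
Proof.
move=> H0 H1 [m Hm]; case: m Hm => [|[|n]] Hn //.
- by rewrite (_ : Ordinal Hn = i0) //; apply/val_inj.
- by rewrite (_ : Ordinal Hn = i1) //; apply/val_inj.
Qed.

Lemma vecE {R : realType} (u : V R) : u = mkv (u i0 ord0) (u i1 ord0).
Proof.
apply/matrixP => i j; rewrite !mxE (ord1 j).
by elim/ord2P: i.
Qed.

Lemma mulMvE {R : realType} (A : Mat R) (u : V R) :
  A *m u = mkv (A i0 i0 * u i0 ord0 + A i0 i1 * u i1 ord0)
               (A i1 i0 * u i0 ord0 + A i1 i1 * u i1 ord0).
Proof.
apply/matrixP => i j; rewrite !mxE sum2 (ord1 j).
by elim/ord2P: i.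
Qed.

Lemma mkvE0 {R : realType} (a b : R) : mkv a b i0 ord0 = a.
Proof. by rewrite mxE. Qed.
Lemma mkvE1 {R : realType} (a b : R) : mkv a b i1 ord0 = b.
Proof. by rewrite mxE. Qed.

Lemma euclE {R : realType} (u : V R) : eucl u = Num.sqrt (u i0 ord0 ^+ 2 + u i1 ord0 ^+ 2).
Proof. by rewrite /eucl sum2. Qed.


Lemma mulMME {R : realType} (A B : Mat R) i j :
  (A *m B) i j = A i i0 * B i0 j + A i i1 * B i1 j.
Proof. by rewrite !mxE sum2. Qed.

Lemma mkME {R : realType} (a b c d : R) :
  [/\ mkM a b c d i0 i0 = a, mkM a b c d i0 i1 = b, mkM a b c d i1 i0 = c & mkM a b c d i1 i1 = d].
Proof. by rewrite !mxE. Qed.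

Lemma hs2E {R : realType} (D : Mat R) :
  hs2 D = D i0 i0 ^+ 2 + D i0 i1 ^+ 2 + D i1 i0 ^+ 2 + D i1 i1 ^+ 2.
Proof. rewrite /hs2 /mxtrace sum2 !mulMME !mxE; lra. Qed.

Lemma s3sq {R : realType} : s3 R ^+ 2 = 3.
Proof. by rewrite /s3 sqr_sqrtr. Qed.
Lemma s3gt0 {R : realType} : 0 < s3 R.
Proof. by rewrite /s3 sqrtr_gt0. Qed.

Lemma Tbound {R : realType} (a : 'I_3) (x y : R) :
  let T := Tm R a in
  (T i0 i0 * x + T i0 i1 * y) ^+ 2 + (T i1 i0 * x + T i1 i1 * y) ^+ 2 <= 9/25 * (x ^+ 2 + y ^+ 2) /\
  1/25 * (x ^+ 2 + y ^+ 2) <= (T i0 i0 * x + T i0 i1 * y) ^+ 2 + (T i1 i0 * x + T i1 i1 * y) ^+ 2.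
Proof.
have h3 := @s3sq R.
case: a => [[|[|[|n]]] Ha] //=; rewrite /Tm /=; rewrite /T1 /T2 /T3;
  rewrite !mxE /=.
- split; nra.
- split.
  + have : 0 <= (s3 R * x - y) ^+ 2 by apply: sqr_ge0.
    nra.
  + have : 0 <= (x + s3 R * y) ^+ 2 by apply: sqr_ge0.
    nra.
- split.
  + have : 0 <= (s3 R * x + y) ^+ 2 by apply: sqr_ge0.
    nra.
  + have : 0 <= (x - s3 R * y) ^+ 2 by apply: sqr_ge0.
    nra.
Qed.
Lemma hs2_mulT {R : realType} (a : 'I_3) (D : Mat R) :
  hs2 (Tm R a *m D) <= 9/25 * hs2 D /\ 1/25 * hs2 D <= hs2 (Tm R a *m D).
Proof.
rewrite !hs2E !mulMME.
have [h1 h2] := Tbound a (D i0 i0) (D i1 i0).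
have [h3 h4] := Tbound a (D i0 i1) (D i1 i1).
split; lra.
Qed.

Lemma DpsiwS {R : realType} (a : 'I_3) s : Dpsiw R (a :: s) = Tm R a *m Dpsiw R s.
Proof. by []. Qed.

Lemma hs2_1 {R : realType} : hs2 (1%:M : Mat R) = 2.
Proof. rewrite hs2E !mxE /=; lra. Qed.

Lemma hs2_Dpsiw {R : realType} (s : seq 'I_3) :
  hs2 (Dpsiw R s) <= 2 * (9/25) ^+ size s /\ 2 * (1/25) ^+ size s <= hs2 (Dpsiw R s).
Proof.
elim: s => [|a s [IH1 IH2]]; first by rewrite /= hs2_1 expr0 mulr1; lra.
rewrite DpsiwS /= !exprS.
have [h1 h2] := hs2_mulT a (Dpsiw R s).
split; nra.
Qed.

Lemma psiwS {R : realType} (a : 'I_3) s (p : V R) : psiw (a :: s) p = psi a (psiw s p).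
Proof. by []. Qed.

Lemma psiw_diff {R : realType} s (p q : V R) :
  psiw s p - psiw s q = Dpsiw R s *m (p - q).
Proof.
elim: s => [|a s IH]; first by rewrite /= mul1mx.
rewrite !psiwS DpsiwS /psi -mulmxA -IH.
rewrite opprD addrACA subrr add0r -mulmxBr; congr (_ *m _).
by rewrite opprB addrA subrK.
Qed.
Lemma Lip_ge {R : realType} (S : set (V R)) (f : V R -> R) (x : V R) (g : R) :
  (forall r, 0 < r -> (g%:E <= LipSup S f x r)%E) -> (g%:E <= Lip_a S f x)%E.
Proof.
move=> H; rewrite /Lip_a.
have mono : {in Interval (BRight (0:R)) (BInfty R false) &, nondecreasing_fun (LipSup S f x)}.
  move=> r r' _ _ rr'; apply: ereal_sup_le => e [y [z [Syz yz yx zx ->]]].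
  exists y, z; split => //; exact: lt_le_trans rr'.
have := nondecreasing_at_right_cvge (BInfty R false) _ mono.
move=> /(_ isT) /(cvg_lim (@ereal_hausdorff R)) ->.
apply/ereal_infP => _ [r rin <-]; apply: H.
by move: rin; rewrite /= in_itv /= andbT.
Qed.
Lemma eps_ge {R : realType} (g : R) (X : \bar R) :
  (forall e, 0 < e -> ((g - e)%:E <= X)%E) -> (g%:E <= X)%E.
Proof.
case: X => [r| |] H.
- rewrite lee_fin; apply/ler_addgt0Pr => e e0; have := H e e0; rewrite lee_fin; lra.
- by rewrite leey.
- by have := H 1 ltr01.
Qed.

Lemma psi_in {R : realType} (S : set (V R)) : is_HSG S -> forall a y, S y -> S (psi a y).
Proof. by move=> [_ _ Seq] a y Sy; rewrite Seq; exists a => //; exists y. Qed.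

Lemma psiw_in {R : realType} (S : set (V R)) : is_HSG S -> forall s y, S y -> S (psiw s y).
Proof. by move=> HS; elim => [|a s IH] y Sy //=; apply: psi_in => //; apply: IH. Qed.

Lemma psi_sub {R : realType} a (y : V R) : psi a y - Pt R a = Tm R a *m (y - Pt R a).
Proof. by rewrite /psi [Pt R a + _]addrC addrK. Qed.

Lemma eucl_ge0 {R : realType} (u : V R) : 0 <= eucl u.
Proof. exact: sqrtr_ge0. Qed.

Lemma eucl_T {R : realType} a (u : V R) : eucl (Tm R a *m u) <= 3/5 * eucl u.
Proof.
rewrite mulMvE !euclE mkvE0 mkvE1.
have [h _] := Tbound a (u i0 ord0) (u i1 ord0).
have -> : 3/5 * Num.sqrt (u i0 ord0 ^+ 2 + u i1 ord0 ^+ 2) =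
   Num.sqrt (9/25 * (u i0 ord0 ^+ 2 + u i1 ord0 ^+ 2)).
  rewrite sqrtrM; last lra.
  rewrite (_ : 9/25 = (3/5)^+2 :> R); last lra.
  by rewrite sqrtr_sqr ger0_norm //; lra.
rewrite ler_sqrt //; apply: mulr_ge0; first lra.
by apply: addr_ge0; apply: sqr_ge0.
Qed.

Lemma entry_le_eucl {R : realType} (u : V R) i j : `|u i j| <= eucl u.
Proof.
rewrite euclE (ord1 j); elim/ord2P: i.
- rewrite -sqrtr_sqr ler_sqrt; last by apply: addr_ge0; apply: sqr_ge0.
  by rewrite lerDl sqr_ge0.
- rewrite -sqrtr_sqr ler_sqrt; last by apply: addr_ge0; apply: sqr_ge0.
  by rewrite lerDr sqr_ge0.
Qed.

Lemma mxnorm_le_eucl {R : realType} (u : V R) : `|u| <= eucl u.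
Proof.
rewrite [leLHS]/Num.Def.normr /= mx_normrE; apply: bigmax_le => [|ij _]; first exact: eucl_ge0.
exact: entry_le_eucl.
Qed.

Lemma entry_le_norm {R : realType} (A : Mat R) i j : `|A i j| <= `|A|.
Proof.
rewrite [leRHS]/Num.Def.normr /= mx_normrE.
by apply/bigmax_geP; right => /=; exists (i, j).
Qed.

Lemma Pt_in {R : realType} (S : set (V R)) : is_HSG S -> forall a, S (Pt R a).
Proof.
move=> HS a; have [Scpt [s0 Ss0] _] := HS.
have Scl : closed S := compact_closed (@norm_hausdorff _ _) Scpt.
pose u n := iter n (psi a) s0.
have Su n : S (u n) by elim: n => [|n IH] //=; apply: psi_in.
set c := eucl (s0 - Pt R a).
have ub n : eucl (u n - Pt R a) <= (3/5) ^+ n * c.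
  elim: n => [|n IH]; first by rewrite expr0 mul1r.
  rewrite /u iterS -/(u n) psi_sub exprS -mulrA.
  apply: le_trans (eucl_T _ _) _; apply: ler_wpM2l => //; lra.
apply: (@closed_cvg _ _ \oo _ u S Scl); first by near=> n; apply: Su.
apply/cvgrPdist_lt => e e0.
have c0 : 0 <= c by exact: eucl_ge0.
have e'0 : 0 < e / (c + 1) by apply: divr_gt0 => //; lra.
have h35 : `|3/5 : R| < 1 by rewrite ger0_norm; lra.
have := cvg_expr h35.
move=> /cvgr_dist_lt /(_ _ e'0); apply: filterS => n.
rewrite sub0r normrN ger0_norm; last by apply: exprn_ge0; lra.
move=> hn; rewrite distrC; apply: le_lt_trans (mxnorm_le_eucl _) _.
apply: le_lt_trans (ub n) _.
have : (3/5) ^+ n * (c + 1) < e by rewrite -ltr_pdivlMr; last lra.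
have : 0 <= (3/5:R) ^+ n by apply: exprn_ge0; lra.
nra.
Unshelve. all: by end_near.
Qed.
Lemma vec_decomp {R : realType} (k : V R) :
  k = k i0 ord0 *: (delta_mx i0 ord0 : V R) + k i1 ord0 *: (delta_mx i1 ord0 : V R).
Proof.
apply/matrixP => i j; rewrite (ord1 j) !mxE; elim/ord2P: i => /=; rewrite ?eqxx /=.
- by rewrite mulr1 mulr0 addr0.
- by rewrite mulr1 mulr0 add0r.
Qed.

Lemma diff_grad {R : realType} (f : V R -> R) (x k : V R) :
  'd f x k = grad f x i0 ord0 * k i0 ord0 + grad f x i1 ord0 * k i1 ord0.
Proof.
rewrite {1}(vec_decomp k) linearD !linearZ /= !mxE.
by rewrite [_ * k i0 _]mulrC [_ * k i1 _]mulrC.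
Qed.

Lemma diff_bound {R : realType} (f : V R -> R) (x : V R) : differentiable f x ->
  forall eta, 0 < eta -> exists2 rho, 0 < rho & forall k : V R, eucl k < rho ->
    `|f (k + x) - f x - 'd f x k| <= eta * eucl k.
Proof.
move=> df eta eta0.
have /eqaddoP := diff_locally df.
move=> /(_ eta eta0) /nbhs_normP [rho rho0 Hb].
exists rho => // k hk.
have : ball_ Num.Def.normr (0 : V R) rho k.
  by rewrite /ball_ /= sub0r normrN; apply: le_lt_trans (mxnorm_le_eucl _) hk.
move=> /Hb /=; rewrite opprD addrA => H; apply: le_trans H _.
by apply: ler_wpM2l; [lra| exact: mxnorm_le_eucl].
Qed.
Lemma CS2 {R : realType} (a b x y : R) : (a * x + b * y) ^+ 2 <= (a ^+ 2 + b ^+ 2) * (x ^+ 2 + y ^+ 2).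
Proof. have : 0 <= (a * y - b * x) ^+ 2 by apply: sqr_ge0. nra. Qed.

Lemma sqrt_le_sum {R : realType} (s p : R) : Num.sqrt (s ^+ 2 + p ^+ 2) <= `|s| + `|p|.
Proof.
rewrite -(ger0_norm (addr_ge0 (normr_ge0 s) (normr_ge0 p))) -sqrtr_sqr.
rewrite ler_sqrt; last exact: sqr_ge0.
rewrite -[s ^+ 2]real_normK ?num_real // -[p ^+ 2]real_normK ?num_real //.
have := normr_ge0 s; have := normr_ge0 p; nra.
Qed.

Lemma abs_le_of_sqr {R : realType} (a b : R) : 0 <= b -> a ^+ 2 <= b ^+ 2 -> `|a| <= b.
Proof.
move=> b0 h; rewrite -(ger0_norm b0) -sqrtr_sqr -[`|b|]sqrtr_sqr ler_sqrt //; exact: sqr_ge0.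
Qed.

Lemma abs_ge_of_sqr {R : realType} (a b : R) : 0 <= b -> b ^+ 2 <= a ^+ 2 -> b <= `|a|.
Proof.
move=> b0 h; rewrite -(ger0_norm b0) -sqrtr_sqr -[`|a|]sqrtr_sqr ler_sqrt //; exact: sqr_ge0.
Qed.

Lemma pair_choice {R : realType} (u1 u2 h k : R) : k ^+ 2 = 1/3 -> 0 <= h ->
  3/4 * h <= u1 ^+ 2 + u2 ^+ 2 ->
  [\/ h/4 <= (- u1 - k * u2) ^+ 2, h/4 <= (- u1 + k * u2) ^+ 2 | h/4 <= (2 * k * u2) ^+ 2].
Proof.
move=> hk h0 hu.
have [hu1|hu2] := lerP (u2 ^+ 2) (u1 ^+ 2).
- have e : (- u1 - k * u2) ^+ 2 + (- u1 + k * u2) ^+ 2 = 2 * u1 ^+ 2 + 2 * k ^+ 2 * u2 ^+ 2.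
    by ring.
  have : 0 <= k ^+ 2 * u2 ^+ 2 by rewrite hk; apply: mulr_ge0; [lra|apply: sqr_ge0].
  have [H|H] := lerP (h/4) ((- u1 - k * u2) ^+ 2); first by constructor 1.
  constructor 2; nra.
- constructor 3; rewrite !exprMn hk; nra.
Qed.

Lemma final_ineq {R : realType} (n s p gs gp Gm kap eta eps F ey ez Yn : R) :
  0 < n -> 0 < eps -> 0 <= kap -> 0 <= eta ->
  n / 2 <= `|s| -> `|p| <= kap * n -> `|gp| <= Gm -> (`|gs| + Gm) * kap <= eps / 4 ->
  eta <= eps / 16 -> 0 <= ey <= 2 * n -> 0 <= ez <= 2 * n ->
  `|F - (gs * s + gp * p)| <= eta * (ey + ez) ->
  0 <= Yn <= `|s| + `|p| ->
  (`|gs| - eps) * Yn <= `|F|.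
Proof.
move=> n0 e0 k0 et0 hs hp hgp hk het /andP[ey0 ey2] /andP[ez0 ez2] hF /andP[Y0 Yle].
have [ge|lt] := lerP eps `|gs|; last first.
  apply: le_trans (normr_ge0 F); apply: mulr_le0_ge0 => //; lra.
have h1 : `|gs * s + gp * p| >= `|gs| * `|s| - Gm * `|p|.
  rewrite -normrM; apply: le_trans (lerB_normD _ _); rewrite lerD2l lerN2 normrM.
  by apply: ler_wpM2r.
have h2 : `|F| >= `|gs * s + gp * p| - eta * (ey + ez).
  have := lerB_dist (gs * s + gp * p) F; rewrite distrC; lra.
have h3 : eta * (ey + ez) <= eps / 16 * (4 * n).
  apply: ler_pM => //; [lra|lra].
have h4 : (`|gs| + Gm) * `|p| <= eps / 4 * n.
  apply: le_trans (_ : (`|gs| + Gm) * (kap * n) <= _).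
    apply: ler_wpM2l => //; have := normr_ge0 gs; have := normr_ge0 gp; lra.
  rewrite mulrA; apply: ler_wpM2r; lra.
have h5 : (`|gs| - eps) * Yn <= (`|gs| - eps) * (`|s| + `|p|).
  apply: ler_wpM2l; lra.
have h6 : eps * (n / 2) <= eps * `|s| by apply: ler_wpM2l; lra.
have := normr_ge0 p; have := normr_ge0 s.
nra.
Qed.
Lemma eucl_D {R : realType} (D : Mat R) (k : V R) : eucl (D *m k) <= Num.sqrt (hs2 D) * eucl k.
Proof.
rewrite mulMvE !euclE mkvE0 mkvE1 hs2E -sqrtrM; last first.
  by rewrite -!addrA; do !apply: addr_ge0; apply: sqr_ge0.
rewrite ler_sqrt; last first.
  apply: mulr_ge0; first by rewrite -!addrA; do !apply: addr_ge0; apply: sqr_ge0.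
  by apply: addr_ge0; apply: sqr_ge0.
have := CS2 (D i0 i0) (D i0 i1) (k i0 ord0) (k i1 ord0).
have := CS2 (D i1 i0) (D i1 i1) (k i0 ord0) (k i1 ord0).
lra.
Qed.

Definition kk {R : realType} : R := 1 / s3 R.
Lemma kk_sq {R : realType} : (kk : R) ^+ 2 = 1/3.
Proof. by rewrite /kk expr_div_n s3sq expr1n. Qed.
Lemma kk_gt0 {R : realType} : 0 < (kk : R).
Proof. by rewrite /kk divr_gt0 // s3gt0. Qed.

Definition j0 : 'I_3 := Ordinal (isT : 0 < 3)%N.
Definition j1 : 'I_3 := Ordinal (isT : 1 < 3)%N.
Definition j2 : 'I_3 := Ordinal (isT : 2 < 3)%N.

Lemma PtE {R : realType} :
  [/\ Pt R j0 = mkv 0 0, Pt R j1 = mkv 1 kk & Pt R j2 = mkv 1 (- kk)].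
Proof. by []. Qed.

Lemma ord3P (P : 'I_3 -> Prop) : P j0 -> P j1 -> P j2 -> forall i, P i.
Proof.
move=> H0 H1 H2 [m Hm]; case: m Hm => [|[|[|n]]] Hn //.
- by rewrite (_ : Ordinal Hn = j0) //; apply/val_inj.
- by rewrite (_ : Ordinal Hn = j1) //; apply/val_inj.
- by rewrite (_ : Ordinal Hn = j2) //; apply/val_inj.
Qed.

Lemma triangle_dist {R : realType} (t : V R) (p : 'I_3) : triangle t -> eucl (Pt R p - t) <= 2.
Proof.
move=> [a [b [c [a0 b0 c0 abc ->]]]].
have hk := @kk_sq R.
have e2 : (2:R) = Num.sqrt (2 ^+ 2) by rewrite sqrtr_sqr ger0_norm.
rewrite euclE [X in _ <= X]e2 ler_sqrt; last lra.
have ek : 1 / s3 R = kk by [].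
have hb : b <= 1 by lra.
have hc : c <= 1 by lra.
have key : forall X Y : R, X ^+ 2 <= 1 -> Y ^+ 2 <= 4 -> X ^+ 2 + (kk * Y) ^+ 2 <= 2 ^+ 2.
  by move=> X Y hX hY; rewrite exprMn hk; lra.
elim/ord3P: p; rewrite /= !mxE /= ek.
- have -> : 0 - (a * 0 + b * kk + c * - kk) = kk * (c - b) by ring.
  apply: key; nra.
- have -> : kk - (a * 0 + b * kk + c * - kk) = kk * (1 - b + c) by ring.
  apply: key; nra.
- have -> : - kk - (a * 0 + b * kk + c * - kk) = kk * (- 1 - b + c) by ring.
  apply: key; nra.
Qed.

Lemma eucl_Proj {R : realType} (u G : V R) : u i0 ord0 ^+ 2 + u i1 ord0 ^+ 2 = 1 ->
  eucl (Proj u *m G) = `|u i0 ord0 * G i0 ord0 + u i1 ord0 * G i1 ord0|.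
Proof.
move=> hu; rewrite /Proj -mulmxA euclE !mxE !big_ord1 !mxE sum2 !mxE.
rewrite !exprMn -mulrDl hu mul1r; exact: sqrtr_sqr.
Qed.
Lemma wm_bound {R : realType} {w m dl : R} : `|w - m| < dl -> -1 <= w <= 1 -> w ^+ 2 - dl <= w * m.
Proof.
move=> /ltr_normlP [h1 h2] /andP [w1 w2].
have : 0 <= (1 - w) * (dl - (w - m)) by apply: mulr_ge0; lra.
have : 0 <= (1 + w) * (dl + (w - m)) by apply: mulr_ge0; lra.
nra.
Qed.

Lemma unit_bound {R : realType} {v1 v2 : R} : v1 ^+ 2 + v2 ^+ 2 = 1 -> -1 <= v1 * v2 <= 1 /\ (-1 <= v1 * v1 <= 1) /\ (-1 <= v2 * v2 <= 1).
Proof.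
move=> h; have := sqr_ge0 v1; have := sqr_ge0 v2; have := sqr_ge0 (v1 - v2); have := sqr_ge0 (v1 + v2).
rewrite !expr2 => *; split; [|split]; apply/andP; split; nra.
Qed.

Lemma alpha_bound {R : realType} {v1 v2 a b c d dl h : R} :
  v1 ^+ 2 + v2 ^+ 2 = 1 -> h = a ^+ 2 + b ^+ 2 + c ^+ 2 + d ^+ 2 -> 0 < h ->
  `|v1 * v1 - h^-1 * (a * a + b * b)| < dl ->
  `|v1 * v2 - h^-1 * (a * c + b * d)| < dl ->
  `|v2 * v1 - h^-1 * (c * a + d * b)| < dl ->
  `|v2 * v2 - h^-1 * (c * c + d * d)| < dl ->
  (1 - 4 * dl) * h <= (v1 * a + v2 * c) ^+ 2 + (v1 * b + v2 * d) ^+ 2.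
Proof.
move=> hv hE h0 e00 e01 e10 e11.
have [b12 [b11 b22]] := unit_bound hv.
have b21 : -1 <= v2 * v1 <= 1 by rewrite mulrC.
have f00 := wm_bound e00 b11; have f01 := wm_bound e01 b12.
have f10 := wm_bound e10 b21; have f11 := wm_bound e11 b22.
have e : (v1 * a + v2 * c) ^+ 2 + (v1 * b + v2 * d) ^+ 2 =
   h * (v1 * v1 * (h^-1 * (a * a + b * b)) + v1 * v2 * (h^-1 * (a * c + b * d))
      + v2 * v1 * (h^-1 * (c * a + d * b)) + v2 * v2 * (h^-1 * (c * c + d * d))).
  have hh : h * h^-1 = 1 by rewrite mulfV // gt_eqF.
  transitivity (((v1 * a + v2 * c) ^+ 2 + (v1 * b + v2 * d) ^+ 2) * (h * h^-1)).
    by rewrite hh mulr1.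
  move: (h^-1) => hi; ring.
have e1 : (v1 * v1) ^+ 2 + (v1 * v2) ^+ 2 + (v2 * v1) ^+ 2 + (v2 * v2) ^+ 2 = 1.
  have -> : (1:R) = (v1 ^+ 2 + v2 ^+ 2) ^+ 2 by rewrite hv expr1n.
  ring.
rewrite e mulrC; apply: ler_wpM2l; lra.
Qed.

Lemma trace_unit {R : realType} {v1 v2 a b c d dl h : R} :
  h = a ^+ 2 + b ^+ 2 + c ^+ 2 + d ^+ 2 -> 0 < h ->
  `|v1 * v1 - h^-1 * (a * a + b * b)| < dl ->
  `|v2 * v2 - h^-1 * (c * c + d * d)| < dl ->
  `|v1 ^+ 2 + v2 ^+ 2 - 1| < 2 * dl.
Proof.
move=> hE h0 e00 e11.
have e : h^-1 * (a * a + b * b) + h^-1 * (c * c + d * d) = 1.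
  rewrite -mulrDr (_ : _ + _ = h); first by rewrite mulVf // gt_eqF.
  by rewrite hE !expr2 addrA.
apply: le_lt_trans (_ : `|v1 * v1 - h^-1 * (a * a + b * b)| + `|v2 * v2 - h^-1 * (c * c + d * d)| < _); last lra.
rewrite -e !expr2 (_ : _ - _ = (v1 * v1 - h^-1 * (a * a + b * b)) + (v2 * v2 - h^-1 * (c * c + d * d))); last ring.
exact: ler_normD.
Qed.

Lemma perp_bound {R : realType} (v1 v2 a b c d e1 e2 : R) : v1 ^+ 2 + v2 ^+ 2 = 1 ->
  (- v2 * (a * e1 + b * e2) + v1 * (c * e1 + d * e2)) ^+ 2 <=
  (a ^+ 2 + b ^+ 2 + c ^+ 2 + d ^+ 2 - ((v1 * a + v2 * c) ^+ 2 + (v1 * b + v2 * d) ^+ 2)) * (e1 ^+ 2 + e2 ^+ 2).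
Proof.
move=> hv.
have -> : a ^+ 2 + b ^+ 2 + c ^+ 2 + d ^+ 2 - ((v1 * a + v2 * c) ^+ 2 + (v1 * b + v2 * d) ^+ 2)
   = (- v2 * a + v1 * c) ^+ 2 + (- v2 * b + v1 * d) ^+ 2.
  have -> : a ^+ 2 + b ^+ 2 + c ^+ 2 + d ^+ 2 = (v1 ^+ 2 + v2 ^+ 2) * (a ^+ 2 + b ^+ 2 + c ^+ 2 + d ^+ 2) by rewrite hv mul1r.
  ring.
have -> : - v2 * (a * e1 + b * e2) + v1 * (c * e1 + d * e2) = (- v2 * a + v1 * c) * e1 + (- v2 * b + v1 * d) * e2 by ring.
exact: CS2.
Qed.

Lemma dot_decomp {R : realType} (v1 v2 G1 G2 Y1 Y2 : R) : v1 ^+ 2 + v2 ^+ 2 = 1 ->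
  G1 * Y1 + G2 * Y2 = (v1 * G1 + v2 * G2) * (v1 * Y1 + v2 * Y2) + (- v2 * G1 + v1 * G2) * (- v2 * Y1 + v1 * Y2).
Proof.
move=> hv; have -> : G1 * Y1 + G2 * Y2 = (v1 ^+ 2 + v2 ^+ 2) * (G1 * Y1 + G2 * Y2) by rewrite hv mul1r.
ring.
Qed.
Lemma entry_sub_le {R : realType} (A B : Mat R) i j : `|A i j - B i j| <= `|A - B|.
Proof. by have := entry_le_norm (A - B) i j; rewrite !mxE. Qed.

Lemma ProjE {R : realType} (u : V R) i j : Proj u i j = u i ord0 * u j ord0.
Proof. by rewrite !mxE big_ord1 !mxE. Qed.

Lemma MentE {R : realType} (k : R) (D : Mat R) i j :
  (k *: (D *m D^T)) i j = k * (D i i0 * D j i0 + D i i1 * D j i1).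
Proof. by rewrite !mxE sum2 !mxE. Qed.

Lemma hs2_pos {R : realType} s : 0 < hs2 (Dpsiw R s).
Proof.
have [_ h] := hs2_Dpsiw (R:=R) s; apply: lt_le_trans h.
by apply: mulr_gt0 => //; apply: exprn_gt0; lra.
Qed.
Theorem lemma4p5 (R : realType) (S : set (V R)) (beta : R)
  (tau : set (V R) -> Mat R) (kappa : {measure set (Vb R) -> \bar R})
  (v : V R -> V R) :
  is_HSG S ->
  simple_pos_eigval S beta ->
  is_kusuoka S beta tau ->
  (forall E, borel E -> kappa E = (\tr (tau E))%:E) ->
  (forall x, S x -> ((v x)^T *m v x) ord0 ord0 = 1) ->
  (forall i : 'I_2, measurable_fun (S : set (Vb R)) (fun x : Vb R => v x i ord0)) ->
  (forall E, borel E -> forall i j : 'I_2,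
     ((tau E i j)%:E = \int[kappa]_(x in (E : set (Vb R))) (v x i ord0 * v x j ord0)%:E)%E) ->
  forall f : V R -> R, C1 f ->
  forall x, hatS v x ->
    ((eucl (Proj (v x) *m grad f x))%:E <= Lip_a S f x)%E.
Proof.
move=> HS _ _ _ _ _ _ f [fdiff _] x [[w [Phiw cvgM]] _].
set vv := v x.
set G := grad f x.
set v1 := vv i0 ord0; set v2 := vv i1 ord0.
set DD := fun l => Dpsiw R (mkseq w l).
have Ment : forall dl, 0 < dl -> \forall l \near \oo, forall i j,
   `|vv i ord0 * vv j ord0 - (hs2 (DD l))^-1 * (DD l i i0 * DD l j i0 + DD l i i1 * DD l j i1)| < dl.
  move=> dl dl0; have := cvgM; move=> /cvgr_dist_lt /(_ dl dl0); apply: filterS => l hl i j.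
  rewrite -ProjE -MentE; exact: le_lt_trans (entry_sub_le _ _ i j) hl.
have hunit : v1 ^+ 2 + v2 ^+ 2 = 1.
  apply/eqP; rewrite -subr_eq0 -normr_eq0; apply/eqP.
  set X := v1 ^+ 2 + v2 ^+ 2 - 1.
  have [q0|] := ltrP 0 `|X|; last by move=> h; apply/le_anti; rewrite h normr_ge0.
  have q4 : 0 < `|X| / 4 by apply: divr_gt0 => //; lra.
  have [N _ HN] := Ment _ q4.
  have := HN N (leqnn N) => H.
  have := trace_unit (hs2E (DD N)) (hs2_pos _) (H i0 i0) (H i1 i1).
  rewrite -/X; lra.

set gs := v1 * G i0 ord0 + v2 * G i1 ord0.
have -> : eucl (Proj vv *m G) = `|gs| by rewrite eucl_Proj.
have hv1 : `|v1| <= 1 by apply: abs_le_of_sqr => //; have := sqr_ge0 v2; lra.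
have hv2 : `|v2| <= 1 by apply: abs_le_of_sqr => //; have := sqr_ge0 v1; lra.
apply: Lip_ge => r r0; apply: eps_ge => eps eps0.
set Gm := `|G i0 ord0| + `|G i1 ord0|.
have Gm0 : 0 <= Gm by apply: addr_ge0.
set kap := eps / (4 * (`|gs| + Gm + 1)).
have kap0 : 0 < kap by apply: divr_gt0 => //; apply: mulr_gt0 => //; have := normr_ge0 gs; lra.
have hkap : (`|gs| + Gm) * kap <= eps / 4.
  rewrite /kap mulrA ler_pdivrMr; last by apply: mulr_gt0 => //; have := normr_ge0 gs; lra.
  have := normr_ge0 gs; nra.
set dl := Num.min (3 * kap ^+ 2 / 16) (1/16).
have dl0 : 0 < dl by rewrite lt_min; apply/andP; split; [apply: divr_gt0 => //; apply: mulr_gt0 => //; exact: exprn_gt0|lra].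
have dl1 : dl <= 3 * kap ^+ 2 / 16 by rewrite ge_min lexx.
have dl2 : dl <= 1/16 by rewrite ge_min lexx orbT.
set eta := eps / 16.
have eta0 : 0 < eta by apply: divr_gt0.
have [rho rho0 Hdiff] := @diff_bound _ f x (fdiff x) _ eta0.
set rm := Num.min r rho.
have rm0 : 0 < rm by rewrite lt_min r0 rho0.
have Hsmall : \forall l \near \oo, hs2 (DD l) < (rm / 2) ^+ 2.
  have h925 : `|9/25 : R| < 1 by rewrite ger0_norm; lra.
  have e0 : 0 < (rm / 2) ^+ 2 / 2 by apply: divr_gt0 => //; apply: exprn_gt0; apply: divr_gt0.
  have := cvg_expr h925; move=> /cvgr_dist_lt /(_ _ e0); apply: filterS => l.
  rewrite sub0r normrN ger0_norm; last by apply: exprn_ge0; lra.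
  move=> hl; have [h1 _] := hs2_Dpsiw (R:=R) (mkseq w l).
  rewrite size_mkseq in h1; rewrite /DD; lra.
have [N1 _ HN1] := Ment _ dl0.
have [N2 _ HN2] := Hsmall.
set l := maxn N1 N2.
have [t tri xt] := Phiw l.
set L := l.+1.
have LN1 : (N1 <= L)%N by rewrite /L /l; apply: leqW; apply: leq_maxl.
have LN2 : (N2 <= L)%N by rewrite /L /l; apply: leqW; apply: leq_maxr.
have HE := HN1 L LN1.
have hsm := HN2 L LN2.
set D := DD L.
set h := hs2 D.
have h0 : 0 < h := hs2_pos _.
set a := D i0 i0; set b := D i0 i1; set c := D i1 i0; set d := D i1 i1.
set u1 := v1 * a + v2 * c; set u2 := v1 * b + v2 * d.
have halpha : (1 - 4 * dl) * h <= u1 ^+ 2 + u2 ^+ 2 :=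
  alpha_bound hunit (hs2E D) h0 (HE i0 i0) (HE i0 i1) (HE i1 i0) (HE i1 i1).
have sh0 : 0 < Num.sqrt h by rewrite sqrtr_gt0.
have shsm : Num.sqrt h * 2 < rm.
  have : Num.sqrt h < rm / 2.
    have rm2 : 0 < rm / 2 by apply: divr_gt0.
    rewrite -(ger0_norm (ltW rm2)) -sqrtr_sqr ltr_sqrt; last exact: exprn_gt0.
    exact: hsm.
  lra.
have rmr : rm <= r by rewrite ge_min lexx.
have rmrho : rm <= rho by rewrite ge_min lexx orbT.
have claim : forall (p q : 'I_3) (e1 e2 : R), Pt R p - Pt R q = mkv e1 e2 ->
    e1 ^+ 2 + e2 ^+ 2 <= 4/3 -> h / 4 <= (u1 * e1 + u2 * e2) ^+ 2 ->
    ((`|gs| - eps)%:E <= LipSup S f x r)%E.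
  move=> p q e1 e2 hpq he hs.
  set s := mkseq w L.
  set y := psiw s (Pt R p); set z := psiw s (Pt R q).
  have Sy : S y by apply: psiw_in => //; exact: Pt_in.
  have Sz : S z by apply: psiw_in => //; exact: Pt_in.
  have xe : x = psiw s t by rewrite xt.
  have ky : y - x = D *m (Pt R p - t) by rewrite xe psiw_diff.
  have kz : z - x = D *m (Pt R q - t) by rewrite xe psiw_diff.
  have eky : eucl (y - x) <= Num.sqrt h * 2.
    rewrite ky; apply: le_trans (eucl_D _ _) _; apply: ler_wpM2l; first exact: sqrtr_ge0.
    exact: triangle_dist.
  have ekz : eucl (z - x) <= Num.sqrt h * 2.
    rewrite kz; apply: le_trans (eucl_D _ _) _; apply: ler_wpM2l; first exact: sqrtr_ge0.
    exact: triangle_dist.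
  have hY : y - z = D *m mkv e1 e2 by rewrite psiw_diff hpq.
  set Y1 := (y - z) i0 ord0; set Y2 := (y - z) i1 ord0.
  have eY1 : Y1 = a * e1 + b * e2 by rewrite /Y1 hY mulMvE mkvE0 !mkvE0 !mkvE1.
  have eY2 : Y2 = c * e1 + d * e2 by rewrite /Y2 hY mulMvE mkvE1 !mkvE0 !mkvE1.
  set sY := v1 * Y1 + v2 * Y2.
  set pY := - v2 * Y1 + v1 * Y2.
  have esY : sY = u1 * e1 + u2 * e2 by rewrite /sY eY1 eY2 /u1 /u2; ring.
  have hsY : Num.sqrt h / 2 <= `|sY|.
    apply: abs_ge_of_sqr; first by apply: divr_ge0 => //; exact: sqrtr_ge0.
    by rewrite expr_div_n sqr_sqrtr ?(ltW h0) // esY; lra.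
  have hpY : `|pY| <= kap * Num.sqrt h.
    apply: abs_le_of_sqr; first by apply: mulr_ge0; [exact: ltW|exact: sqrtr_ge0].
    rewrite exprMn sqr_sqrtr ?(ltW h0) //.
    have hE : a ^+ 2 + b ^+ 2 + c ^+ 2 + d ^+ 2 = h by rewrite /h hs2E.
    have := perp_bound v1 v2 a b c d e1 e2 hunit; rewrite -/u1 -/u2 -eY1 -eY2 -/pY hE => hp.
    apply: le_trans hp _.
    have hh : h - (u1 ^+ 2 + u2 ^+ 2) <= 4 * dl * h by lra.
    have he0 : 0 <= e1 ^+ 2 + e2 ^+ 2 by apply: addr_ge0; apply: sqr_ge0.
    have hk : 4 * dl * h * (4/3) <= kap ^+ 2 * h.
      rewrite -mulrA [h * _]mulrC mulrA; apply: ler_wpM2r; lra.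
    have [hn|hn] := lerP 0 (h - (u1 ^+ 2 + u2 ^+ 2)).
      apply: le_trans hk; apply: le_trans (_ : _ <= (h - (u1 ^+ 2 + u2 ^+ 2)) * (4/3)) _.
        by apply: ler_wpM2l.
      apply: ler_wpM2r; lra.
    apply: le_trans (_ : _ <= 0) _; first by apply: mulr_le0_ge0 => //; exact: ltW.
    by apply: mulr_ge0; [exact: sqr_ge0|exact: ltW].
  have hgp : `|- v2 * G i0 ord0 + v1 * G i1 ord0| <= Gm.
    apply: le_trans (ler_normD _ _) _; rewrite !normrM normrN /Gm.
    apply: lerD; rewrite -[X in _ <= X]mul1r; apply: ler_wpM2r => //.
  have eky' : eucl (y - x) < rho by apply: le_lt_trans eky _; apply: lt_le_trans shsm rmrho.
  have ekz' : eucl (z - x) < rho by apply: le_lt_trans ekz _; apply: lt_le_trans shsm rmrho.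
  set F := f y - f z.
  have eYY : y - z = (y - x) - (z - x) by rewrite opprB addrA subrK.
  have eY1' : Y1 = (y - x) i0 ord0 - (z - x) i0 ord0 by rewrite /Y1 eYY !mxE.
  have eY2' : Y2 = (y - x) i1 ord0 - (z - x) i1 ord0 by rewrite /Y2 eYY !mxE.
  have Fb : `|F - (G i0 ord0 * Y1 + G i1 ord0 * Y2)| <= eta * (eucl (y - x) + eucl (z - x)).
    have dy := Hdiff (y - x) eky'; have dz := Hdiff (z - x) ekz'.
    rewrite subrK diff_grad -/G in dy; rewrite subrK diff_grad -/G in dz.
    rewrite (_ : F - _ = (f y - f x - (G i0 ord0 * (y - x) i0 ord0 + G i1 ord0 * (y - x) i1 ord0))
       - (f z - f x - (G i0 ord0 * (z - x) i0 ord0 + G i1 ord0 * (z - x) i1 ord0))); last first.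
      by rewrite /F eY1' eY2'; ring.
    apply: le_trans (ler_normB _ _) _; rewrite mulrDr; exact: lerD.
  have eYsq : Y1 ^+ 2 + Y2 ^+ 2 = sY ^+ 2 + pY ^+ 2.
    by have := dot_decomp v1 v2 Y1 Y2 Y1 Y2 hunit; rewrite -/sY -/pY !expr2.
  have Yn_le : eucl (y - z) <= `|sY| + `|pY|.
    by rewrite euclE -/Y1 -/Y2 eYsq; exact: sqrt_le_sum.
  have Yn_ge : `|sY| <= eucl (y - z).
    rewrite euclE -/Y1 -/Y2 eYsq -sqrtr_sqr ler_sqrt; last by apply: addr_ge0; apply: sqr_ge0.
    by rewrite lerDl sqr_ge0.
  have Ynpos : 0 < eucl (y - z).
    apply: lt_le_trans Yn_ge; apply: lt_le_trans hsY; exact: divr_gt0.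
  have key : (`|gs| - eps) * eucl (y - z) <= `|F|.
    apply: (@final_ineq _ (Num.sqrt h) sY pY gs (- v2 * G i0 ord0 + v1 * G i1 ord0) Gm kap eta eps F
       (eucl (y - x)) (eucl (z - x))) => //.
    - exact: ltW.
    - exact: ltW.
    - by rewrite eucl_ge0 /=; lra.
    - by rewrite eucl_ge0 /=; lra.
    - by rewrite -(dot_decomp v1 v2 (G i0 ord0) (G i1 ord0) Y1 Y2 hunit).
    - by rewrite eucl_ge0 Yn_le.
  have yz : y <> z.
    move=> eyz; move: Ynpos; rewrite eyz subrr euclE !mxE expr0n /= addr0 sqrtr0.
    by rewrite ltxx.
  apply: (@le_trans _ _ ((`|f y - f z| / eucl (y - z))%:E)).
    by rewrite lee_fin ler_pdivlMr.
  apply: ereal_sup_ubound; exists y, z; split => //.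
  - by apply: le_lt_trans eky _; apply: lt_le_trans shsm rmr.
  - by apply: le_lt_trans ekz _; apply: lt_le_trans shsm rmr.
have hu34 : 3/4 * h <= u1 ^+ 2 + u2 ^+ 2.
  apply: le_trans halpha; apply: ler_wpM2r; lra.
have e2 : forall a1 a2 b1 b2 : R, mkv a1 a2 - mkv b1 b2 = mkv (a1 - b1) (a2 - b2).
  by move=> a1 a2 b1 b2; apply/matrixP => i j; rewrite !mxE; case: ifP.
have hk := @kk_sq R.
case: (pair_choice u1 u2 h kk hk (ltW h0) hu34) => H.
- apply: (claim j0 j1 (-1) (- kk)).
  + by rewrite /= e2 !sub0r.
  + by rewrite sqrrN expr1n sqrrN hk; lra.
  + by rewrite (_ : u1 * -1 + u2 * - kk = - u1 - kk * u2) //; ring.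
- apply: (claim j0 j2 (-1) kk).
  + by rewrite /= e2 !sub0r opprK.
  + by rewrite sqrrN expr1n hk; lra.
  + by rewrite (_ : u1 * -1 + u2 * kk = - u1 + kk * u2) //; ring.
- apply: (claim j1 j2 0 (2 * kk)).
  + rewrite /= e2 subrr opprK; congr mkv; change ((kk : R) + kk = 2 * kk); ring.
  + by rewrite expr0n /= add0r exprMn hk; lra.
  + by rewrite (_ : u1 * 0 + u2 * (2 * kk) = 2 * kk * u2) //; ring.
Qed.
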